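(* Consider a sequence of finite populations whose size $N\to\infty$, each equipped with its own randomized design, exposure mapping and fixed potential outcomes as in the context, and fix two exposures $d_k,d_l$. Assume: (Condition 1) there is a constant $c<\infty$, not depending on $N$, such that $|y_i(d)|/\pi_i(d)\le c$ for all units $i$, all exposures $d$, and all populations in the sequence; (Condition 2) for each pair $(a,b)\in\{k,l\}^2$, setting $g_{ij}=0$ if $\pi_{ij}(d_a,d_b)=\pi_i(d_a)\pi_j(d_b)$ and $g_{ij}=1$ otherwise, one has $\sum_{i=1}^N\sum_{j=1}^N g_{ij}=o(N^2)$. Then $\widehat{\tau_{HT}}(d_k,d_l)-\tau(d_k,d_l)\to 0$ in probability as $N\to\infty$, where $\widehat{\tau_{HT}}(d_k,d_l)=\frac1N\sum_{i=1}^N\Big[\frac{\mathbf{I}(D_i=d_k)y_i(d_k)}{\pi_i(d_k)}-\frac{\mathbf{I}(D_i=d_l)y_i(d_l)}{\pi_i(d_l)}\Big]$ and $\tau(d_k,d_l)=\frac1N\sum_{i=1}^N[y_i(d_k)-y_i(d_l)]$.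
   Context: For each population in the sequence: units $i=1,\dots,N$; a random treatment assignment vector $\mathbf{Z}$ with known distribution on a finite set $\Omega$; an exposure mapping $f:\Omega\times\Theta\to\Delta$ (finite set of exposures) with unit traits $\theta_i$, giving $D_i=f(\mathbf{Z},\theta_i)$; $\pi_i(d)=\Pr(D_i=d)\in(0,1)$; $\pi_{ij}(d,d')=\Pr(D_i=d,D_j=d')$ (so $\pi_{ij}(d,d)$ is the joint probability that both $i$ and $j$ receive $d$). Potential outcomes $y_i(d)$ are fixed reals and the observed outcome is $y_i(D_i)$. The design, exposure mapping and potential outcomes may change along the sequence (in the paper the sequence is formed by pooling $B$ subpopulations of sizes $n_b\ge1$ and letting $B\to\infty$). *)

(* Defs.v *)
From mathcomp Require Import all_boot all_order all_algebra.
From mathcomp Require Import all_classical all_reals all_analysis.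
Set Implicit Arguments. Unset Strict Implicit. Unset Printing Implicit Defensive.
Import Order.TTheory GRing.Theory Num.Theory.
Local Open Scope ring_scope.

Section Design.
Variables (R : realType) (Omega : finType) (P : Omega -> R).

Definition prob (A : pred Omega) : R := \sum_(w | A w) P w.

Definition is_design : Prop := (forall w, 0 <= P w) /\ \sum_w P w = 1.

Variables (Delta Theta : Type) (N : nat).
Variables (f : Omega -> Theta -> Delta) (theta : 'I_N -> Theta).

Definition exposure (w : Omega) (i : 'I_N) : Delta := f w (theta i).
End Design.

Section Exposures.
Variables (R : realType) (Omega : finType) (P : Omega -> R).
Variables (Delta : eqType) (Theta : Type) (N : nat).
Variables (f : Omega -> Theta -> Delta) (theta : 'I_N -> Theta).

Definition pi1 (i : 'I_N) (d : Delta) : R :=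
  prob P (fun w => exposure f theta w i == d).

Definition pi2 (i j : 'I_N) (d d' : Delta) : R :=
  prob P (fun w => (exposure f theta w i == d) && (exposure f theta w j == d')).

Definition gdep (i j : 'I_N) (d d' : Delta) : nat :=
  (pi2 i j d d' != pi1 i d * pi1 j d')%R.

Variable y : 'I_N -> Delta -> R.

Definition tauHT (dk dl : Delta) (w : Omega) : R :=
  (N%:R)^-1 * \sum_(i < N)
     ((exposure f theta w i == dk)%:R * y i dk / pi1 i dk
      - (exposure f theta w i == dl)%:R * y i dl / pi1 i dl).

Definition tau (dk dl : Delta) : R :=
  (N%:R)^-1 * \sum_(i < N) (y i dk - y i dl).
End Exposures.

(* Main.v *)
Require Import Defs.
From mathcomp Require Import all_boot all_order all_algebra.
From mathcomp Require Import all_classical all_reals all_analysis.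
From mathcomp Require Import ring lra.
Import Order.TTheory GRing.Theory Num.Theory numFieldNormedType.Exports.
Local Open Scope ring_scope.

Section One.
Variables (R : realType) (Omega : finType) (P : Omega -> R).
Variables (Delta : eqType) (Theta : Type) (N : nat).
Variables (f : Omega -> Theta -> Delta) (theta : 'I_N -> Theta).
Variable y : 'I_N -> Delta -> R.

Definition Ind i d w : R := (exposure f theta w i == d)%:R.
Notation pi := (pi1 P f theta).

Lemma sum_ind (A : pred Omega) : \sum_w P w * (A w)%:R = prob P A.
Proof.
rewrite /prob [RHS]big_mkcond /=; apply: eq_bigr => w _.
by case: (A w); rewrite ?mulr1 ?mulr0.
Qed.

Lemma cov_eq (hd : is_design P) i j a b :
  \sum_w P w * ((Ind i a w - pi i a) * (Ind j b w - pi j b))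
  = pi2 P f theta i j a b - pi i a * pi j b.
Proof.
have e : forall w, P w * ((Ind i a w - pi i a) * (Ind j b w - pi j b)) =
   P w * ((exposure f theta w i == a) && (exposure f theta w j == b))%:R
   - pi j b * (P w * (exposure f theta w i == a)%:R)
   - pi i a * (P w * (exposure f theta w j == b)%:R)
   + pi i a * pi j b * P w.
  by move=> w; rewrite /Ind; case: (exposure f theta w i == a); case: (exposure f theta w j == b) => /=; ring.
rewrite (eq_bigr _ (fun w _ => e w)) big_split /=. rewrite !sumrB. rewrite -!mulr_sumr !sum_ind.
move: hd => [_ hs]. rewrite hs /pi1 /pi2; ring.
Qed.

Lemma ind_dev i a : 0 < pi i a < 1 -> forall w, `|Ind i a w - pi i a| <= 1.
Proof.
move=> /andP[h0 h1] w; rewrite /Ind; case: (_ == _) => /=.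
  by rewrite ger0_norm; lra.
by rewrite sub0r normrN gtr0_norm //; lra.
Qed.

Lemma cov_le (hd : is_design P) i j a b :
  0 < pi i a < 1 -> 0 < pi j b < 1 ->
  `|\sum_w P w * ((Ind i a w - pi i a) * (Ind j b w - pi j b))|
   <= (gdep P f theta i j a b)%:R.
Proof.
move=> hi hj; rewrite /gdep; case: eqP => [e|_] /=.
  by rewrite cov_eq // e subrr normr0.
apply: le_trans (ler_norm_sum _ _ _) _.
case: hd => hp <-; apply: ler_sum => w _.
rewrite normrM (ger0_norm (hp w)) -[leRHS]mulr1 ler_wpM2l //.
rewrite normrM -[1]mulr1; apply: ler_pM => //; exact: ind_dev.
Qed.

Variables (dk dl : Delta) (c : R).
Hypothesis hd : is_design P.
Hypothesis hpi : forall i d, 0 < pi i d < 1.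
Hypothesis hc : forall i d, `|y i d| / pi i d <= c.

Definition rr i a := y i a / pi i a.
Definition vv i a w := Ind i a w - pi i a.
Definition ee i w := rr i dk * vv i dk w - rr i dl * vv i dl w.
Definition Cv i j a b := \sum_w P w * (vv i a w * vv j b w).

Lemma pi_neq0 i d : pi i d != 0.
Proof. by case/andP: (hpi i d) => h _; rewrite gt_eqF. Qed.

Lemma diff_eq w : tauHT P f theta y dk dl w - tau y dk dl = N%:R^-1 * \sum_(i < N) ee i w.
Proof.
rewrite /tauHT /tau -mulrBr -sumrB; congr (_ * _); apply: eq_bigr => i _.
rewrite /ee /rr /vv /Ind; field.
by rewrite pi_neq0 pi_neq0.
Qed.

Lemma rr_le i a : `|rr i a| <= c.
Proof.
rewrite /rr normrM normfV (gtr0_norm (proj1 (andP (hpi i a)))); exact: hc.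
Qed.

Lemma c_ge0 (i : 'I_N) : 0 <= c.
Proof. exact: le_trans (normr_ge0 _) (rr_le i dk). Qed.

Lemma term_le (i j : 'I_N) a b : `|rr i a * rr j b * Cv i j a b| <= c * c * (gdep P f theta i j a b)%:R.
Proof.
rewrite normrM (normrM (rr i a)); apply: ler_pM.
- by rewrite mulr_ge0.
- by [].
- by apply: ler_pM => //; exact: rr_le.
- exact: (cov_le hd i j a b (hpi i a) (hpi j b)).
Qed.

Lemma norm4 (a b c' d : R) : `|a - b - c' + d| <= `|a| + `|b| + `|c'| + `|d|.
Proof.
apply: le_trans (ler_normD _ _) _; rewrite lerD2r.
apply: le_trans (ler_normB _ _) _; rewrite lerD2r.
exact: ler_normB.
Qed.

Lemma pair_eq (i j : 'I_N) : \sum_w P w * (ee i w * ee j w) =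
  rr i dk * rr j dk * Cv i j dk dk - rr i dk * rr j dl * Cv i j dk dl
  - rr i dl * rr j dk * Cv i j dl dk + rr i dl * rr j dl * Cv i j dl dl.
Proof.
have e : forall w, P w * (ee i w * ee j w) =
  rr i dk * rr j dk * (P w * (vv i dk w * vv j dk w))
  - rr i dk * rr j dl * (P w * (vv i dk w * vv j dl w))
  - rr i dl * rr j dk * (P w * (vv i dl w * vv j dk w))
  + rr i dl * rr j dl * (P w * (vv i dl w * vv j dl w)).
  by move=> w; rewrite /ee; ring.
by rewrite (eq_bigr _ (fun w _ => e w)) big_split /= !sumrB -!mulr_sumr.
Qed.

Definition gsum i j := (gdep P f theta i j dk dk + gdep P f theta i j dk dl
   + gdep P f theta i j dl dk + gdep P f theta i j dl dl)%N.

Lemma pair_le (i j : 'I_N) : `|\sum_w P w * (ee i w * ee j w)| <= c * c * (gsum i j)%:R.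
Proof.
rewrite pair_eq; apply: le_trans (norm4 _ _ _ _) _.
rewrite /gsum !natrD !mulrDr.
by do !apply: lerD; apply: term_le.
Qed.

Lemma second_moment :
  \sum_w P w * (N%:R^-1 * \sum_(i < N) ee i w) ^+ 2 =
  N%:R^-1 ^+ 2 * \sum_(i < N) \sum_(j < N) \sum_w P w * (ee i w * ee j w).
Proof.
have e : forall w, P w * (N%:R^-1 * \sum_(i < N) ee i w) ^+ 2 =
   \sum_(i < N) \sum_(j < N) N%:R^-1 ^+ 2 * (P w * (ee i w * ee j w)).
  move=> w; rewrite exprMn (expr2 (\sum_(i < N) ee i w)) big_distrlr /= !mulr_sumr.
  apply: eq_bigr => i _; rewrite !mulr_sumr; apply: eq_bigr => j _; ring.
rewrite (eq_bigr _ (fun w _ => e w)) exchange_big /= mulr_sumr.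
apply: eq_bigr => i _; rewrite exchange_big /= mulr_sumr; apply: eq_bigr => j _.
by rewrite mulr_sumr.
Qed.

Definition G a b : R := (\sum_(i < N) \sum_(j < N) gdep P f theta i j a b)%:R.

Lemma main_bound eps : 0 < eps ->
  prob P (fun w => eps < `|tauHT P f theta y dk dl w - tau y dk dl|) <=
  eps^-1 ^+ 2 * (c * c) * ((G dk dk + G dk dl + G dl dk + G dl dl) / N%:R ^+ 2).
Proof.
move=> he.
apply: (@le_trans _ _ (eps^-1 ^+ 2 * \sum_w P w * (N%:R^-1 * \sum_(i < N) ee i w) ^+ 2)).
  rewrite /prob big_mkcond mulr_sumr /=; apply: ler_sum => w _.
  case: hd => hp _; rewrite -diff_eq; case: ifP => h.
    set X := tauHT _ _ _ _ _ _ _ - _.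
    have h1 : 1 <= eps^-1 * `|X|.
      by rewrite ler_pdivlMl // mulr1 ltW.
    have h2 : 1 <= (eps^-1 * `|X|) ^+ 2 by apply: exprn_ege1.
    have -> : eps^-1 ^+ 2 * (P w * X ^+ 2) = P w * (eps^-1 * `|X|) ^+ 2.
      by rewrite exprMn real_normK ?num_real //; ring.
    by rewrite -[leLHS]mulr1 ler_wpM2l.
  apply: mulr_ge0; first by rewrite exprn_ge0 // invr_ge0 ltW.
  by rewrite mulr_ge0 // sqr_ge0.
rewrite -mulrA second_moment; apply: ler_wpM2l; first by rewrite exprn_ge0 // invr_ge0 ltW.
have eG : \sum_(i < N) \sum_(j < N) (gsum i j)%:R = G dk dk + G dk dl + G dl dk + G dl dl :> R.
  rewrite /G -!natrD.
  under eq_bigr do rewrite -natr_sum.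
  rewrite -natr_sum; congr (_ %:R).
  under eq_bigr do rewrite !big_split.
  by rewrite !big_split.
apply: le_trans (ler_norm _) _.
rewrite normrM ger0_norm ?exprn_ge0 ?invr_ge0 //.
apply: (@le_trans _ _ (N%:R^-1 ^+ 2 * (c * c * \sum_(i < N) \sum_(j < N) (gsum i j)%:R))).
  rewrite ler_wpM2l ?exprn_ge0 ?invr_ge0 // mulr_sumr.
  apply: le_trans (ler_norm_sum _ _ _) _; apply: ler_sum => i _.
  rewrite mulr_sumr.
  apply: le_trans (ler_norm_sum _ _ _) _; apply: ler_sum => j _.
  exact: pair_le.
rewrite eG exprVn le_eqVlt; apply/orP; left; apply/eqP; ring.
Qed.

End One.

Local Open Scope classical_set_scope.
Theorem mainTheorem4 (R : realType) (Delta : finType)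
  (N : nat -> nat) (Omega : nat -> finType) (P : forall m, Omega m -> R)
  (Theta : nat -> Type) (f : forall m, Omega m -> Theta m -> Delta)
  (theta : forall m, 'I_(N m) -> Theta m)
  (y : forall m, 'I_(N m) -> Delta -> R) (dk dl : Delta) (c : R) :
  ((fun m => (N m)%:R : R) @ \oo --> +oo) ->
  (forall m, is_design (P m)) ->
  (forall m (i : 'I_(N m)) (d : Delta),
      0 < pi1 (P m) (f m) (theta m) i d < 1) ->
  (forall m (i : 'I_(N m)) (d : Delta),
      `|y m i d| / pi1 (P m) (f m) (theta m) i d <= c) ->
  (forall a b, a \in [:: dk; dl] -> b \in [:: dk; dl] ->
     (fun m => (\sum_(i < N m) \sum_(j < N m)
                  gdep (P m) (f m) (theta m) i j a b)%:R / ((N m)%:R ^+ 2) : R)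
       @ \oo --> 0) ->
  forall eps : R, 0 < eps ->
    (fun m => prob (P m) (fun w =>
        eps < `|tauHT (P m) (f m) (theta m) (y m) dk dl w
                - tau (y m) dk dl|)) @ \oo --> 0.
Proof.
move=> _ hd hpi hc hg eps he.
pose s a b m : R := (\sum_(i < N m) \sum_(j < N m)
                  gdep (P m) (f m) (theta m) i j a b)%:R / ((N m)%:R ^+ 2).
pose k : R := eps^-1 ^+ 2 * (c * c).
have hk : (fun m => k * (s dk dk m + s dk dl m + s dl dk m + s dl dl m)) @ \oo --> k * (0 + 0 + 0 + 0).
  have h1 : dk \in [:: dk; dl] by rewrite inE eqxx.
  have h2 : dl \in [:: dk; dl] by rewrite !inE eqxx orbT.
  apply: (cvgM (f := fun _ => k) (g := fun m => s dk dk m + s dk dl m + s dl dk m + s dl dl m)); first exact: cvg_cst.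
  by repeat apply: cvgD; apply: hg.
rewrite !addr0 mulr0 in hk.
refine (squeeze_cvgr _ (cvg_cst 0) hk).
apply: filterE => m; apply/andP; split.
  by apply: sumr_ge0 => w _; case: (hd m).
apply: le_trans (@main_bound _ _ _ _ _ _ _ _ (y m) dk dl c (hd m) (hpi m) (hc m) _ he) _.
by rewrite /k /G -!mulrDl.
Qed.
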